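(* Let $M=\frac32-\sqrt2$. For real $f_1,f_2,y_1,y_2$ put $$\hat A=(1-f_1)(1-y_1)+3(1-f_2)(1-y_2),\quad \hat F_1=\frac{(1-f_1)(1-y_1)}{\hat A},\quad \hat F_2=\frac{(1-f_2)(1-y_2)}{\hat A},$$ and $$\hat\alpha(f_1,f_2,y_1,y_2)=\frac{1}{\frac12-\hat F_1}\left(\frac{(1-\hat F_1)\,y_1(\frac12-y_1)}{1-y_1}+\frac{3\hat F_2\,y_2(\frac12-y_2)}{1-y_2}+12Mf_1\cdot\frac{\hat F_2}{1-f_2}\right).$$ Then for all $f_1,f_2,y_1,y_2\in[0,\frac12]$ such that $\frac1{13}\le f_1\le\frac12$ and $f_1+3f_2=1$, we have $\hat\alpha(f_1,f_2,y_1,y_2)\le\frac{963}{1000}$.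
   Context: In the paper's notation, with $\Phi(x)=\frac{1}{x(\frac12-x)}$, the factor $\frac1{\frac12-\hat F_1}$ is $\Phi(\hat F_1)\hat F_1$ and $y(\frac12-y)=1/\Phi(y)$. Under the hypotheses $0<\hat F_1<\frac12$, so $\hat\alpha$ is well defined. *)

(* Defs.v *)
From Stdlib Require Import Reals.
Open Scope R_scope.

Definition M : R := 3/2 - sqrt 2.

Definition Ahat (f1 f2 y1 y2 : R) : R :=
  (1 - f1) * (1 - y1) + 3 * ((1 - f2) * (1 - y2)).

Definition F1hat (f1 f2 y1 y2 : R) : R :=
  (1 - f1) * (1 - y1) / Ahat f1 f2 y1 y2.

Definition F2hat (f1 f2 y1 y2 : R) : R :=
  (1 - f2) * (1 - y2) / Ahat f1 f2 y1 y2.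

Definition alphahat (f1 f2 y1 y2 : R) : R :=
  let F1 := F1hat f1 f2 y1 y2 in
  let F2 := F2hat f1 f2 y1 y2 in
  / (1/2 - F1) *
  ( (1 - F1) * (y1 * (1/2 - y1)) / (1 - y1)
  + 3 * F2 * (y2 * (1/2 - y2)) / (1 - y2)
  + 12 * M * f1 * (F2 / (1 - f2)) ).

(* Main.v *)
Require Import Defs.
From Stdlib Require Import Reals Lra QArith Qreals.
Open Scope R_scope.

Definition cQ : Q := 963#1000.
Definition MuQ : Q := 169#1970.

Definition okQ (fa fb va vb : Q) : bool :=
  let w := ((va + vb) * (1#2))%Q in
  let a := (6 - 3 * / (w*w))%Q in
  let b := (6 * / w)%Q in
  let L := if Qle_bool (a*va+b) (a*vb+b) then (a*va+b)%Q else (a*vb+b)%Q in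
  let Tu := (18 - 3*cQ + 2*(12*MuQ*(1-3*fa)*/(1-fa)) - L)%Q in
  let Pl := (6 - 3*cQ*fb*/((1-fb)*va))%Q in
  negb (Qle_bool 1 fb) && negb (Qle_bool va 0) &&
  (Qle_bool Tu 0 || Qle_bool (Tu*Tu) (12*Pl)).

Fixpoint chk (n : nat) (fa fb va vb : Q) : bool :=
  if okQ fa fb va vb then true else
  match n with
  | O => false
  | S n => if Qle_bool ((fb-fa)*4) (vb-va) then
             let m := Qred ((va+vb)*(1#2)) in
             if chk n fa fb va m then chk n fa fb m vb else false
           else
             let m := Qred ((fa+fb)*(1#2)) in
             if chk n fa m va vb then chk n m fb va vb else false
  end.

Lemma chk_ok : chk 23 (1#6) (4#13) (1#2) 1 = true.
Proof. Time (vm_compute; reflexivity). Qed.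

Definition cR : R := 963/1000.

Definition Good (f2 v : R) : Prop :=
  let T := 18 - 3*cR + 2*(12*M*(1-3*f2)/(1-f2)) - 6*v - 3/v in
  let P := 6 - 3*cR*f2/((1-f2)*v) in
  T <= 0 \/ T*T <= 12*P.

Lemma Q2R_inv' (x : Q) : Q2R x <> 0 -> Q2R (/ x) = / Q2R x.
Proof.
  intro H. rewrite RMicromega.Q2R_inv_ext.
  destruct (Qeq_bool x 0) eqn:E; [|reflexivity].
  apply RMicromega.Qeq_true in E. rewrite RMicromega.Q2R_0 in E. contradiction.
Qed.

Lemma Q2R_lit (z : Z) (p : positive) : Q2R (Qmake z p) = IZR z / IZR (Zpos p).
Proof. reflexivity. Qed.

Lemma Qle_bool_R (x y : Q) : Qle_bool x y = true -> Q2R x <= Q2R y.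
Proof. apply RMicromega.Qle_true. Qed.

Lemma Qle_bool_R_false (x y : Q) : Qle_bool x y = false -> Q2R y < Q2R x.
Proof.
  intro H. destruct (Rlt_or_le (Q2R y) (Q2R x)) as [h|h]; [exact h|].
  apply Rle_Qle in h. apply Qle_bool_iff in h. congruence.
Qed.

Lemma frac_le a b c d : 0 < b -> 0 < d -> a*d <= c*b -> a/b <= c/d.
Proof.
  intros Hb Hd H.
  replace (a/b) with ((a*d) * /(b*d)) by (field; repeat split; lra).
  replace (c/d) with ((c*b) * /(b*d)) by (field; repeat split; lra).
  apply Rmult_le_compat_r; [left; apply Rinv_0_lt_compat; nra | exact H].
Qed.

Lemma M_le : M <= 169/1970.
Proof.
  unfold M.
  assert (1393/985 <= sqrt 2).
  { rewrite <- (sqrt_pow2 (1393/985)) by lra. apply sqrt_le_1_alt. lra. }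
  lra.
Qed.

Lemma M_ge : 0 <= M.
Proof.
  unfold M. assert (sqrt 2 <= 3/2).
  { rewrite <- (sqrt_pow2 (3/2)) by lra. apply sqrt_le_1_alt. lra. }
  lra.
Qed.

Lemma okQ_sound fa fb va vb f2 v :
  okQ fa fb va vb = true -> Q2R fa <= f2 <= Q2R fb -> Q2R va <= v <= Q2R vb ->
  1/6 <= f2 <= 4/13 -> 1/2 <= v <= 1 -> Good f2 v.
Proof.
  intros H Hf Hv Hf2 Hv2. unfold okQ in H.
  apply andb_prop in H as [H Hmain]. apply andb_prop in H as [Hfb Hva].
  apply Bool.negb_true_iff, Qle_bool_R_false in Hfb.
  apply Bool.negb_true_iff, Qle_bool_R_false in Hva.
  rewrite RMicromega.Q2R_1 in Hfb. rewrite RMicromega.Q2R_0 in Hva.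
  set (w := ((va + vb) * (1#2))%Q) in *.
  set (a := (6 - 3 * / (w*w))%Q) in *.
  set (b := (6 * / w)%Q) in *.
  assert (HW : Q2R w = (Q2R va + Q2R vb) / 2).
  { unfold w. rewrite Q2R_mult, Q2R_plus, Q2R_lit. simpl IZR. lra. }
  assert (HWpos : 0 < Q2R w) by lra.
  assert (HA : Q2R a = 6 - 3 / (Q2R w * Q2R w)).
  { unfold a. rewrite Q2R_minus, Q2R_mult, Q2R_inv', Q2R_mult by (rewrite Q2R_mult; nra).
    rewrite (Q2R_lit 6), (Q2R_lit 3). simpl IZR. field. lra. }
  assert (HB : Q2R b = 6 / Q2R w).
  { unfold b. rewrite Q2R_mult, Q2R_inv' by lra. rewrite (Q2R_lit 6). simpl IZR. field. lra. }
  (* tangent bound *)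
  assert (Htan : Q2R a * v + Q2R b <= 6*v + 3/v).
  { rewrite HA, HB. set (W := Q2R w) in *.
    assert (0 < v) by lra.
    assert (E : 6*v + 3/v - ((6 - 3/(W*W))*v + 6/W) = 3*(v-W)*(v-W)/(v*W*W)) by (field; repeat split; lra).
    assert (0 <= 3*(v-W)*(v-W)/(v*W*W)).
    { apply Rmult_le_pos. pose proof (Rle_0_sqr (v-W)); unfold Rsqr in *; lra. left. apply Rinv_0_lt_compat. apply Rmult_lt_0_compat; nra. }
    lra. }
  set (L := if Qle_bool (a*va+b) (a*vb+b) then (a*va+b)%Q else (a*vb+b)%Q) in *.
  assert (HL : Q2R L <= 6*v + 3/v).
  { unfold L. destruct (Qle_bool (a*va+b) (a*vb+b)) eqn:E.
    - apply Qle_bool_R in E. rewrite !Q2R_plus, !Q2R_mult in E; rewrite !Q2R_plus, !Q2R_mult.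
      destruct (Rle_or_lt 0 (Q2R a)) as [ha|ha];
      [ assert (Q2R a * Q2R va <= Q2R a * v) by (apply Rmult_le_compat_l; lra)
      | assert (Q2R a * Q2R vb <= Q2R a * v) by (apply Rmult_le_compat_neg_l; lra)]; lra.
    - apply Qle_bool_R_false in E. rewrite !Q2R_plus, !Q2R_mult in E; rewrite !Q2R_plus, !Q2R_mult.
      destruct (Rle_or_lt 0 (Q2R a)) as [ha|ha];
      [ assert (Q2R a * Q2R va <= Q2R a * v) by (apply Rmult_le_compat_l; lra)
      | assert (Q2R a * Q2R vb <= Q2R a * v) by (apply Rmult_le_compat_neg_l; lra)]; lra. }
  set (Tu := (18 - 3*cQ + 2*(12*MuQ*(1-3*fa)*/(1-fa)) - L)%Q) in *.
  set (Pl := (6 - 3*cQ*fb*/((1-fb)*va))%Q) in *.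
  assert (HTu : Q2R Tu = 18 - 3*cR + 2*(12*(169/1970)*(1-3*Q2R fa)/(1-Q2R fa)) - Q2R L).
  { unfold Tu. rewrite !Q2R_minus, !Q2R_plus, !Q2R_mult, Q2R_inv'.
    - rewrite !Q2R_minus, !Q2R_mult. unfold cQ, MuQ, cR.
      rewrite !Q2R_lit, ?RMicromega.Q2R_1. simpl IZR. field. lra.
    - rewrite Q2R_minus, RMicromega.Q2R_1. lra. }
  assert (HPl : Q2R Pl = 6 - 3*cR*Q2R fb/((1-Q2R fb)*Q2R va)).
  { unfold Pl. rewrite !Q2R_minus, !Q2R_mult, Q2R_inv'.
    - rewrite !Q2R_mult, !Q2R_minus. unfold cQ, cR.
      rewrite !Q2R_lit, ?RMicromega.Q2R_1. simpl IZR. field. nra.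
    - rewrite Q2R_mult, Q2R_minus, RMicromega.Q2R_1. nra. }
  unfold Good. cbv zeta.
  set (T := 18 - 3*cR + 2*(12*M*(1-3*f2)/(1-f2)) - 6*v - 3/v).
  set (P := 6 - 3*cR*f2/((1-f2)*v)).
  assert (HK : 12*M*(1-3*f2)/(1-f2) <= 12*(169/1970)*(1-3*Q2R fa)/(1-Q2R fa)).
  { apply frac_le; try lra. pose proof M_le. pose proof M_ge.
    assert (M*((1-3*f2)*(1-Q2R fa)) <= 169/1970*((1-3*f2)*(1-Q2R fa)))
      by (apply Rmult_le_compat_r; nra).
    nra. }
  assert (HT : T <= Q2R Tu) by (unfold T; rewrite HTu; lra).
  assert (HP : Q2R Pl <= P).
  { unfold P. rewrite HPl. unfold cR.
    assert (3 * (963/1000) * f2 / ((1 - f2) * v) <= 3 * (963/1000) * Q2R fb / ((1 - Q2R fb) * Q2R va)).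
    { apply frac_le; [nra|nra|].
      assert (h1: f2*(1-Q2R fb) <= Q2R fb*(1-f2)) by nra.
      assert (h2: f2*(1-Q2R fb)*Q2R va <= Q2R fb*(1-f2)*Q2R va) by (apply Rmult_le_compat_r; lra).
      assert (h3: Q2R fb*(1-f2)*Q2R va <= Q2R fb*(1-f2)*v) by (apply Rmult_le_compat_l; nra).
      lra. }
    lra. }
  apply orb_prop in Hmain as [Hm|Hm]; apply Qle_bool_R in Hm.
  - left. rewrite RMicromega.Q2R_0 in Hm. lra.
  - rewrite Q2R_mult, Q2R_mult in Hm. rewrite (Q2R_lit 12) in Hm. simpl IZR in Hm.
    destruct (Rle_or_lt T 0) as [h|h]; [left; exact h|right]. nra.
Qed.

Lemma chk_sound n : forall fa fb va vb, chk n fa fb va vb = true ->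
  forall f2 v, Q2R fa <= f2 <= Q2R fb -> Q2R va <= v <= Q2R vb ->
  1/6 <= f2 <= 4/13 -> 1/2 <= v <= 1 -> Good f2 v.
Proof.
  induction n as [|n IH]; intros fa fb va vb H f2 v Hf Hv Hf2 Hv2; simpl in H;
  destruct (okQ fa fb va vb) eqn:E; try (eapply okQ_sound; eauto; fail);
  try discriminate.
  destruct (Qle_bool ((fb-fa)*4) (vb-va)).
  - match type of H with (if chk n _ _ _ ?m then _ else false) = true =>
      destruct (chk n fa fb va m) eqn:E1; [|discriminate];
      destruct (Rle_or_lt v (Q2R m));
      [ eapply (IH fa fb va m); eauto; lra
      | eapply (IH fa fb m vb); eauto; lra ] end.
  - match type of H with (if chk n _ ?m _ _ then _ else false) = true =>
      destruct (chk n fa m va vb) eqn:E1; [|discriminate];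
      destruct (Rle_or_lt f2 (Q2R m));
      [ eapply (IH fa m va vb); eauto; lra
      | eapply (IH m fb va vb); eauto; lra ] end.
Qed.

Lemma good_all f2 v : 1/6 <= f2 <= 4/13 -> 1/2 <= v <= 1 -> Good f2 v.
Proof.
  intros. eapply (chk_sound 23 (1#6) (4#13) (1#2) 1 chk_ok);
  rewrite ?Q2R_lit, ?RMicromega.Q2R_1; simpl IZR; eauto; lra.
Qed.

Theorem lemma20 (f1 f2 y1 y2 : R) :
  0 <= f1 <= 1/2 -> 0 <= f2 <= 1/2 -> 0 <= y1 <= 1/2 -> 0 <= y2 <= 1/2 ->
  1/13 <= f1 <= 1/2 -> f1 + 3 * f2 = 1 ->
  alphahat f1 f2 y1 y2 <= 963/1000.
Proof.
  intros H1 H2 H3 H4 H5 H6.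
  assert (Hf2 : 1/6 <= f2 <= 4/13) by lra.
  assert (Hv : 1/2 <= 1 - y2 <= 1) by lra.
  pose proof (good_all f2 (1-y2) Hf2 Hv) as G. unfold Good in G. cbv zeta in G.
  set (u := 1 - y1). set (v := 1 - y2) in *.
  set (T := 18 - 3*cR + 2*(12*M*(1-3*f2)/(1-f2)) - 6*v - 3/v) in *.
  set (P := 6 - 3*cR*f2/((1-f2)*v)) in *.
  assert (Hu : 1/2 <= u <= 1) by (unfold u; lra).
  assert (HP : 0 < P).
  { unfold P, cR. assert (3*(963/1000)*f2/((1-f2)*v) <= 3/1) by (apply frac_le; nra).
    lra. }
  assert (HTP : T <= P*u + 3/u).
  { assert (E : (P*u + 3/u)*(P*u + 3/u) - 12*P = (P*u - 3/u)*(P*u - 3/u)) by (field; lra).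
    assert (0 < P*u + 3/u).
    { assert (0 < 3/u) by (apply Rdiv_lt_0_compat; lra). nra. }
    destruct G as [G|G]; [lra|].
    pose proof (Rle_0_sqr (P*u - 3/u)). unfold Rsqr in *.
    set (S := P*u + 3/u) in *.
    destruct (Rle_or_lt T S) as [h|h]; [exact h|].
    assert (S*S < T*T) by nra. lra. }
  set (a := (1 - f1) * (1 - y1)). set (b := (1 - f2) * (1 - y2)).
  assert (Ha : 0 < a) by (unfold a; nra).
  assert (Hb : 0 < b) by (unfold b; nra).
  assert (Hab : a < 3*b) by (unfold a, b; nra).
  set (g1 := y1 * (1/2 - y1) / (1 - y1)). set (g2 := y2 * (1/2 - y2) / (1 - y2)).
  set (K := 12 * M * f1 / (1 - f2)).
  assert (Heq : alphahat f1 f2 y1 y2 = 2*b*(3*g1+3*g2+K)/(3*b-a)).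
  { unfold alphahat, F1hat, F2hat, Ahat. fold a. fold b. unfold g1, g2, K.
    field. repeat split; try lra; nra. }
  rewrite Heq.
  assert (Hid : 2*b*(3*g1+3*g2+K) - cR*(3*b-a) = b*(T - (P*u + 3/u))).
  { unfold g1, g2, K, T, P, a, b, u, v.
    replace f1 with (1 - 3*f2) by lra. field. repeat split; lra. }
  assert (b*(T - (P*u + 3/u)) <= 0) by nra.
  unfold cR in Hid.
  replace (963/1000) with ((963/1000)/1) by field.
  apply frac_le; lra.
Qed.
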